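(* Let $(E,\mathcal{P})$ be a random locally convex module over $K$ with base $(\Omega,\mathcal{F},P)$, endowed with its $(\varepsilon,\lambda)$-topology, and let $G$ be a nonempty $L^0$-convex subset of $E$. If $G$ is $L^0$-convexly compact, then $G$ is closed in $E$.
   Context: $(\Omega,\mathcal{F},P)$ is a probability space, $K=\mathbb{R}$ or $\mathbb{C}$, $L^0(\mathcal{F},K)$ is the algebra of equivalence classes (modulo $P$-a.s. equality) of $K$-valued $\mathcal{F}$-measurable random variables, $L^0=L^0(\mathcal{F},\mathbb{R})$, $L^0_+=\{\xi\in L^0:\xi\ge0\}$. An $L^0$-seminorm on an $L^0(\mathcal{F},K)$-module $E$ is a map $\|\cdot\|:E\to L^0_+$ with $\|\xi x\|=|\xi|\|x\|$ and $\|x+y\|\le\|x\|+\|y\|$. A random locally convex module $(E,\mathcal{P})$ is an $L^0(\mathcal{F},K)$-module $E$ with a family $\mathcal{P}$ of $L^0$-seminorms such that $\bigvee\{\|x\|:\|\cdot\|\in\mathcal{P}\}=0$ iff $x=\theta$. For finite nonempty $\mathcal{Q}\subset\mathcal{P}$ let $\|x\|_{\mathcal{Q}}=\bigvee_{\|\cdot\|\in\mathcal{Q}}\|x\|$; the $(\varepsilon,\lambda)$-topology on $E$ has local base at $\theta$ the sets $\{x: P\{\|x\|_{\mathcal{Q}}<\varepsilon\}>1-\lambda\}$ ($\mathcal{Q}$ finite nonempty, $\varepsilon>0$, $0<\lambda<1$). $G\subset E$ is $L^0$-convex if $\xi x+(1-\xi)y\in G$ for all $x,y\in G$, $\xi\in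 L^0$, $0\le\xi\le1$. An $L^0$-convex set $G$ is $L^0$-convexly compact if every family of $L^0$-convex subsets of $G$ which are closed (in the relative topology of $G$) and which has the finite intersection property has nonempty intersection. *)

(* Defs.v *)
From HB Require Import structures.
From mathcomp Require Import all_boot all_order all_algebra.
From mathcomp Require Import all_classical all_reals all_analysis.
From mathcomp.real_closed Require Import complex.
From Stdlib Require Lists.List.
Set Implicit Arguments. Unset Strict Implicit. Unset Printing Implicit Defensive.
Import Order.TTheory GRing.Theory Num.Theory.
Local Open Scope ring_scope.
Local Open Scope classical_set_scope.

(* Conventions.
   - Scalars K are encoded inside C = R[i]: K = C when [isC = true];
     K = R when [isC = false], in which case the admissible scalar functions
     are the real-valued ones.
   - An element of L^0(F,K) is represented by a measurable function
     Omega -> R[i] (a representative of its a.s.-class); all axioms are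
     required to be invariant under P-a.s. equality.
   - An L^0(F,K)-module is an additive group E with an action [act] of the
     representatives which satisfies the module axioms and only depends on
     the a.s.-class of the scalar. *)

Section L0.
Context (R : realType) (d : measure_display) (T : measurableType d)
        (P : probability T R).

Definition creal (x : R) : R[i] := Complex x 0.

Definition cmeas (f : T -> R[i]) :=
  measurable_fun setT (fun w => complex.Re (f w)) /\ measurable_fun setT (fun w => complex.Im (f w)).

Definition L0scalar (isC : bool) (f : T -> R[i]) :=
  cmeas f /\ (~~ isC -> forall w, complex.Im (f w) = 0).

Definition ae_eq (f g : T -> R[i]) := {ae P, forall w, f w = g w}.

Record L0module (isC : bool) (E : zmodType) (act : (T -> R[i]) -> E -> E) : Prop := {
  L0m_one : forall x, act (fun _ => 1) x = x;
  L0m_mul : forall f g x, L0scalar isC f -> L0scalar isC g ->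
    act (fun w => f w * g w) x = act f (act g x);
  L0m_addl : forall f g x, L0scalar isC f -> L0scalar isC g ->
    act (fun w => f w + g w) x = act f x + act g x;
  L0m_addr : forall f x y, L0scalar isC f -> act f (x + y) = act f x + act f y;
  L0m_ae : forall f g x, L0scalar isC f -> L0scalar isC g -> ae_eq f g ->
    act f x = act g x }.

Record L0seminorm (isC : bool) (E : zmodType) (act : (T -> R[i]) -> E -> E)
    (nrm : E -> T -> R) : Prop := {
  L0n_meas : forall x, measurable_fun setT (nrm x);
  L0n_ge0 : forall x, {ae P, forall w, 0 <= nrm x w};
  L0n_hom : forall f x, L0scalar isC f ->
    {ae P, forall w, nrm (act f x) w = ComplexField.Normc.normc (f w) * nrm x w};
  L0n_tri : forall x y, {ae P, forall w, nrm (x + y) w <= nrm x w + nrm y w} }.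

Definition RLCModule (isC : bool) (E : zmodType) (act : (T -> R[i]) -> E -> E)
    (I : Type) (p : I -> E -> T -> R) :=
  [/\ L0module isC act,
      forall i, L0seminorm isC act (p i) &
      forall x, (forall i, {ae P, forall w, p i x w = 0}) <-> x = 0].

Definition normQ (E : zmodType) (I : Type) (p : I -> E -> T -> R)
    (Q : seq I) (x : E) : T -> R :=
  fun w => \big[Num.max/0]_(i <- Q) p i x w.

Definition epslamU (E : zmodType) (I : Type) (p : I -> E -> T -> R)
    (Q : seq I) (eps lam : R) : set E :=
  [set x | ((1 - lam)%:E < P [set w | (normQ p Q x w < eps)%R])%E].

Definition adherent (E : zmodType) (I : Type) (p : I -> E -> T -> R)
    (A : set E) (x : E) :=
  forall (Q : seq I) (eps lam : R), Q <> [::] -> 0 < eps -> 0 < lam < 1 ->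
    exists2 y, A y & epslamU p Q eps lam (y - x).

Definition epslam_closed (E : zmodType) (I : Type) (p : I -> E -> T -> R)
    (A : set E) := forall x, adherent p A x -> A x.

Definition rel_closed (E : zmodType) (I : Type) (p : I -> E -> T -> R)
    (G A : set E) := A `<=` G /\ forall x, G x -> adherent p A x -> A x.

Definition L0convex (E : zmodType) (act : (T -> R[i]) -> E -> E) (G : set E) :=
  forall (x y : E) (xi : T -> R), G x -> G y -> measurable_fun setT xi ->
    {ae P, forall w, 0 <= xi w <= 1} ->
    G (act (fun w => creal (xi w)) x + act (fun w => creal (1 - xi w)) y).

Definition fip (E : Type) (Fam : set (set E)) :=
  forall s : seq (set E), s <> [::] -> (forall A, Stdlib.Lists.List.In A s -> Fam A) ->
    exists x, forall A, Stdlib.Lists.List.In A s -> A x.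

Definition L0convexly_compact (E : zmodType) (act : (T -> R[i]) -> E -> E)
    (I : Type) (p : I -> E -> T -> R) (G : set E) :=
  L0convex act G /\
  forall Fam : set (set E),
    (forall A, Fam A -> L0convex act A /\ rel_closed p G A) ->
    fip Fam -> exists x, forall A, Fam A -> A x.

End L0.

(* Main.v *)
Require Import Defs.
From HB Require Import structures.
From mathcomp Require Import all_boot all_order all_algebra.
From mathcomp Require Import all_classical all_reals all_analysis.
From mathcomp.real_closed Require Import complex.
From mathcomp Require Import lra measurable_realfun.
Set Implicit Arguments. Unset Strict Implicit. Unset Printing Implicit Defensive.
Import Order.TTheory GRing.Theory Num.Theory.
Local Open Scope ring_scope.
Local Open Scope classical_set_scope.

Section Aux.
Context (R : realType) (d : measure_display) (T : measurableType d)
        (P : probability T R) (isC : bool) (E : zmodType)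
        (act : (T -> R[i]) -> E -> E) (HM : L0module P isC act).

Lemma mlt (f : T -> R) c : measurable_fun setT f -> measurable [set w | f w < c].
Proof.
move=> mf; have := mf measurableT _ (measurable_itv `]-oo, c[%R).
rewrite setTI; congr measurable; apply/seteqP; split => w /=; rewrite in_itv /=; by [].
Qed.

Lemma L0scalar_creal (xi : T -> R) : measurable_fun setT xi ->
  @L0scalar R d T isC (fun w => creal (xi w)).
Proof. move=> mxi; split; [split => /= | by []]. exact: mxi. exact: measurable_cst. Qed.

Lemma L0scalar_cst (c : R) : @L0scalar R d T isC (fun _ => creal c).
Proof. apply: L0scalar_creal; exact: measurable_cst. Qed.

Lemma creal_add (a b : R) : creal a + creal b = creal (a + b).
Proof. by rewrite /creal /=; congr (Complex _ _); rewrite addr0. Qed.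

Lemma normc_creal (a : R) : ComplexField.Normc.normc (creal a) = `|a|.
Proof. by rewrite /creal /= expr0n /= addr0 sqrtr_sqr. Qed.

Lemma act0 f : @L0scalar R d T isC f -> act f 0 = 0.
Proof.
move=> sf; have := L0m_addr HM 0 0 sf; rewrite addr0 => h.
by apply: (@addrI _ (act f 0)); rewrite addr0 -h.
Qed.

Lemma actN f x : @L0scalar R d T isC f -> act f (- x) = - act f x.
Proof.
move=> sf; apply/eqP; rewrite -subr_eq0 opprK -(L0m_addr HM _ _ sf) addNr.
by rewrite act0.
Qed.

Lemma actB f x y : @L0scalar R d T isC f -> act f (x - y) = act f x - act f y.
Proof. by move=> sf; rewrite (L0m_addr HM _ _ sf) actN. Qed.

Lemma act_cst0 x : act (fun _ => creal (0:R)) x = 0.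
Proof.
have h := L0m_addl HM x (L0scalar_cst 0) (L0scalar_cst 0).
have e : (fun w : T => creal (0:R) + creal (0:R)) = (fun _ => creal (0:R)).
  by apply: funext => w; rewrite creal_add addr0.
rewrite e in h; apply: (@addrI _ (act (fun _ => creal (0:R)) x)).
by rewrite addr0 -h.
Qed.

Lemma act_decomp (xi : T -> R) x : measurable_fun setT xi ->
  act (fun w => creal (xi w)) x + act (fun w => creal (1 - xi w)) x = x.
Proof.
move=> mxi.
have m1 : measurable_fun setT (fun w => 1 - xi w).
  by apply: measurable_funB => //; exact: measurable_cst.
rewrite -(L0m_addl HM x (L0scalar_creal mxi) (L0scalar_creal m1)).
have -> : (fun w => creal (xi w) + creal (1 - xi w)) = (fun _ => 1).
  by apply: funext => w; rewrite creal_add addrC subrK.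
exact: (L0m_one HM).
Qed.

Lemma act_m1 x : act (fun _ => creal (-1:R)) x = - x.
Proof.
have h := L0m_addl HM x (L0scalar_cst (-1)) (L0scalar_cst 1).
have e : (fun w : T => creal (-1:R) + creal (1:R)) = (fun _ => creal (0:R)).
  by apply: funext => w; rewrite creal_add addNr.
rewrite e act_cst0 in h.
have e1 : act (fun _ => creal (1:R)) x = x by exact: (L0m_one HM).
rewrite e1 in h; apply/eqP; rewrite -subr_eq0 opprK; by rewrite -h.
Qed.

End Aux.

Section Norms.
Context (R : realType) (d : measure_display) (T : measurableType d)
        (P : probability T R) (isC : bool) (E : zmodType)
        (act : (T -> R[i]) -> E -> E) (I : Type) (p : I -> E -> T -> R)
        (HR : RLCModule P isC act p).

Let HM : L0module P isC act := let: And3 a _ _ := HR in a.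
Let Hs : forall i, L0seminorm P isC act (p i) := let: And3 _ a _ := HR in a.

Local Notation cr xi := (fun w => creal (xi w)).

Lemma p_hom i (xi : T -> R) u : measurable_fun setT xi ->
  {ae P, forall w, p i (act (cr xi) u) w = `|xi w| * p i u w}.
Proof.
move=> mxi; have := L0n_hom (Hs i) u (L0scalar_creal isC mxi).
by apply: filterS => w ->; rewrite normc_creal.
Qed.

Lemma p_opp i u : {ae P, forall w, p i (- u) w = p i u w}.
Proof.
have := p_hom i u (measurable_cst (-1 : R)).
rewrite (act_m1 HM); apply: filterS => w ->.
by rewrite normrN1 mul1r.
Qed.

Lemma normQ_cons i Q u w :
  normQ p (i :: Q) u w = Num.max (p i u w) (normQ p Q u w).
Proof. by rewrite /normQ big_cons. Qed.

Lemma normQ_nil u w : normQ p [::] u w = 0.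
Proof. by rewrite /normQ big_nil. Qed.

Lemma normQ_ge0 Q u w : 0 <= normQ p Q u w.
Proof.
elim: Q => [|i Q IH]; first by rewrite normQ_nil.
by rewrite normQ_cons le_max IH orbT.
Qed.

Lemma normQ_tri Q u v : {ae P, forall w,
  normQ p Q (u + v) w <= normQ p Q u w + normQ p Q v w}.
Proof.
elim: Q => [|i Q IH]; first by apply: aeW => w; rewrite !normQ_nil addr0.
have h1 := L0n_tri (Hs i) u v.
apply: filterS2 h1 IH => w h1w IHw.
rewrite !normQ_cons ge_max; apply/andP; split.
  apply: (le_trans h1w); apply: lerD; by rewrite le_max lexx.
apply: (le_trans IHw); apply: lerD; by rewrite le_max lexx orbT.
Qed.

Lemma normQ_opp Q u : {ae P, forall w, normQ p Q (- u) w = normQ p Q u w}.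
Proof.
elim: Q => [|i Q IH]; first by apply: aeW => w; rewrite !normQ_nil.
have h1 := p_opp i u.
apply: filterS2 h1 IH => w h1w IHw.
by rewrite !normQ_cons h1w IHw.
Qed.

Lemma normQ_hom Q (xi : T -> R) u : measurable_fun setT xi ->
  {ae P, forall w, normQ p Q (act (cr xi) u) w = `|xi w| * normQ p Q u w}.
Proof.
move=> mxi.
elim: Q => [|i Q IH]; first by apply: aeW => w; rewrite !normQ_nil mulr0.
have h1 := p_hom i u mxi.
apply: filterS2 h1 IH => w h1w IHw.
by rewrite !normQ_cons h1w IHw maxr_pMr.
Qed.

Lemma normQ_meas Q u : measurable_fun setT (normQ p Q u).
Proof.
elim: Q => [|i Q IH].
  have -> : normQ p [::] u = cst 0 by apply: funext => w; rewrite normQ_nil.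
  exact: measurable_cst.
have -> : normQ p (i :: Q) u = (p i u) \max (normQ p Q u).
  by apply: funext => w; rewrite normQ_cons.
apply: measurable_maxr => //; exact: (L0n_meas (Hs i)).
Qed.

End Norms.

Section Prob.
Context (R : realType) (d : measure_display) (T : measurableType d)
        (P : probability T R).
Local Open Scope ereal_scope.

Lemma small_meas0 (A : set T) : measurable A ->
  (forall m : nat, P A <= (m.+1%:R^-1)%:E) -> P A = 0.
Proof.
move=> mA h.
have fA : P A \is a fin_num by rewrite fin_num_measure.
rewrite -(fineK fA) in h *.
have a0 : (0 <= fine (P A))%R by apply: fine_ge0; exact: measure_ge0.
case: (ltrP 0 (fine (P A))) => [apos|ale0]; last first.
  by congr (_%:E); apply/eqP; rewrite eq_le ale0 a0.
have [k hk] := ltr_add_invr apos.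
have := h k; rewrite lee_fin add0r in hk *.
by rewrite leNgt hk.
Qed.

Lemma probC_le (S : set T) (lam : R) : measurable S ->
  (1 - lam)%:E < P S -> P (~` S) <= lam%:E.
Proof.
move=> mS h; rewrite probability_setC //.
have fS : P S \is a fin_num by rewrite fin_num_measure.
rewrite -(fineK fS) in h *.
rewrite lte_fin in h.
rewrite -EFinB lee_fin; lra.
Qed.

Lemma aeI2 (A B : T -> Prop) : {ae P, forall w, A w} ->
  {ae P, forall w, B w} -> {ae P, forall w, A w /\ B w}.
Proof. by move=> ha hb; apply: filterS2 ha hb => w. Qed.

End Prob.

Lemma mgt (R : realType) (d : measure_display) (T : measurableType d)
  (f : T -> R) c : measurable_fun setT f -> measurable [set w | c < f w].
Proof.
move=> mf; have := mf measurableT _ (measurable_itv `]c, +oo[%R).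
rewrite setTI; congr measurable; apply/seteqP; split => w /=; rewrite in_itv /= andbT; by [].
Qed.

Section DsetS.
Context (R : realType) (d : measure_display) (T : measurableType d)
        (P : probability T R) (isC : bool) (E : zmodType)
        (act : (T -> R[i]) -> E -> E) (I : Type) (p : I -> E -> T -> R)
        (HR : RLCModule P isC act p) (G : set E) (HG : L0convex P act G) (x : E).

Let HM : L0module P isC act := let: And3 a _ _ := HR in a.
Let Hs : forall i, L0seminorm P isC act (p i) := let: And3 _ a _ := HR in a.

Local Notation cr xi := (fun w => creal (xi w)).

Definition Dset Q (eps : R) (U : set T) : set E :=
  [set z | G z /\ {ae P, forall w, U w -> normQ p Q (z - x) w <= eps}].

Lemma Dset_sub Q eps U V : U `<=` V -> Dset Q eps V `<=` Dset Q eps U.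
Proof. by move=> UV z [Gz h]; split => //; apply: filterS h => w h /UV. Qed.

Lemma conv_id (xi : T -> R) z1 z2 : measurable_fun setT xi ->
  (act (cr xi) z1 + act (cr (1 - xi)) z2) - x =
  act (cr xi) (z1 - x) + act (cr (fun w => 1 - xi w)) (z2 - x).
Proof.
move=> mxi.
have m1 : measurable_fun setT (fun w => 1 - xi w).
  by apply: measurable_funB => //; exact: measurable_cst.
rewrite (actB HM _ _ (L0scalar_creal isC mxi)) (actB HM _ _ (L0scalar_creal isC m1)).
rewrite -{1}(act_decomp HM x mxi).
by rewrite opprD addrACA.
Qed.

Lemma normQ_conv Q a b (xi : T -> R) eps (U : set T) : measurable_fun setT xi ->
  {ae P, forall w, 0 <= xi w <= 1} ->
  {ae P, forall w, U w -> normQ p Q a w <= eps} ->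
  {ae P, forall w, U w -> normQ p Q b w <= eps} ->
  {ae P, forall w, U w ->
     normQ p Q (act (cr xi) a + act (cr (fun w => 1 - xi w)) b) w <= eps}.
Proof.
move=> mxi hxi ha hb.
have m1 : measurable_fun setT (fun w => 1 - xi w).
  by apply: measurable_funB => //; exact: measurable_cst.
have h1 := normQ_tri HR Q (act (cr xi) a) (act (cr (fun w => 1 - xi w)) b).
have h2 := normQ_hom HR Q a mxi.
have h3 := normQ_hom HR Q b m1.
apply: filterS (aeI2 (aeI2 hxi (aeI2 ha hb)) (aeI2 h1 (aeI2 h2 h3))) => w.
move=> [[/andP[x0 x1] [hA hB]] [t1 [t2 t3]]] Uw.
apply: (le_trans t1); rewrite t2 t3.
have := hA Uw; have := hB Uw.
rewrite (ger0_norm x0) ger0_norm ?subr_ge0 //.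
move=> u v.
apply: (le_trans (lerD (ler_wpM2l x0 v) (ler_wpM2l _ u))); first by rewrite subr_ge0.
by rewrite -mulrDl addrC subrK mul1r.
Qed.

Lemma Dset_convex Q eps U : L0convex P act (Dset Q eps U).
Proof.
move=> z1 z2 xi [G1 H1] [G2 H2] mxi hxi; split; first exact: HG.
rewrite conv_id //; exact: normQ_conv.
Qed.

Lemma lam_ok (m : nat) : 0 < (m.+2%:R : R)^-1 < 1.
Proof.
apply/andP; split; first by rewrite invr_gt0 ltr0Sn.
by rewrite invf_lt1 ?ltr0Sn // ltr1n.
Qed.

Lemma inv_le (m : nat) : (m.+2%:R : R)^-1 <= m.+1%:R^-1.
Proof. by rewrite lef_pV2 ?posrE ?ltr0Sn // ler_nat. Qed.

Lemma Dset_closed Q eps U : 0 <= eps -> measurable U ->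
  rel_closed P p G (Dset Q eps U).
Proof.
move=> e0 mU; split; first by move=> z [].
move=> w0 Gw0 adh; split => //.
case: Q adh => [|i0 Q0] adh; first by apply: aeW => w _; rewrite normQ_nil.
set Q := i0 :: Q0.
have Qn : Q <> [::] by [].
pose Bad n := U `&` [set w | eps + n.+1%:R^-1 < normQ p Q (w0 - x) w].
have mBad n : measurable (Bad n).
  by apply: measurableI => //; apply: mgt; exact: (normQ_meas HR).
have Bad0 n : P (Bad n) = 0%E.
  apply: small_meas0 => // m.
  have [z [Gz Hz] Hsm] := adh Q (n.+1%:R^-1) (m.+2%:R^-1) Qn
     ltac:(by rewrite invr_gt0 ltr0Sn) (lam_ok m).

  pose S := [set w | normQ p Q (z - w0) w < n.+1%:R^-1].
  have mS : measurable S by apply: mlt; exact: (normQ_meas HR).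
  have hC := probC_le mS Hsm.
  have good : {ae P, forall w, U w -> S w ->
      normQ p Q (w0 - x) w <= eps + n.+1%:R^-1}.
    have t1 := normQ_tri HR Q (w0 - z) (z - x).
    have t2 := normQ_opp HR Q (z - w0).
    apply: filterS (aeI2 Hz (aeI2 t1 t2)) => w [h1 [h2 h3]] Uw Sw.
    rewrite opprB in h3.
    have e : w0 - z + (z - x) = w0 - x by rewrite addrA subrK.
    rewrite e in h2.
    apply: (le_trans h2); rewrite addrC; apply: lerD; first exact: h1.
    by rewrite h3; apply: ltW.
  case: good => M [mM PM0 sub].
  have sB : Bad n `<=` ~` S `|` M.
    move=> w [Uw bw]; case: (pselect (S w)) => Sw; last by left.
    right; apply: sub => g; have := g Uw Sw; by rewrite leNgt bw.
  apply: (le_trans (le_measure _ _ _ sB)); rewrite ?inE //.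
    by apply: measurableU => //; exact: measurableC.
  apply: (le_trans (measureU2 _ _ _)) => //; first exact: measurableC.
  rewrite [X in (_ + X <= _)%E](_ : _ = 0%E); last exact: PM0.
  rewrite adde0; apply: (le_trans hC); rewrite lee_fin; exact: inv_le.
have negl : P.-negligible (\bigcup_n Bad n).
  apply: negligible_bigcup => n; exists (Bad n); split => //; exact: Bad0.
apply: negligibleS negl => w /= /not_implyP [Uw /negP]; rewrite -ltNge => lt.
have [k hk] := ltr_add_invr lt.
by exists k.
Qed.

Lemma diff1 (xi : T -> R) z' y : measurable_fun setT xi ->
  (act (cr xi) z' + act (cr (fun w => 1 - xi w)) y) - z' =
  act (cr (fun w => 1 - xi w)) (y - z').
Proof.
move=> mxi.
have m1 : measurable_fun setT (fun w => 1 - xi w).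
  by apply: measurable_funB => //; exact: measurable_cst.
rewrite (actB HM _ _ (L0scalar_creal isC m1)).
rewrite -{2}(act_decomp HM z' mxi).
by rewrite opprD addrACA subrr add0r.
Qed.

Lemma diff2 (xi : T -> R) z' y : measurable_fun setT xi ->
  (act (cr xi) z' + act (cr (fun w => 1 - xi w)) y) - y =
  act (cr xi) (z' - y).
Proof.
move=> mxi.
rewrite (actB HM _ _ (L0scalar_creal isC mxi)).
rewrite -{2}(act_decomp HM y mxi).
by rewrite opprD addrACA subrr addr0.
Qed.

Lemma stage1 Q eps : L0convexly_compact P act p G ->
  Q <> [::] -> 0 < eps -> adherent P p G x -> exists z, Dset Q eps setT z.
Proof.
move=> HC Qn e0 adh.
have : forall n : nat, exists y, G y /\ epslamU P p Q eps (n.+2%:R^-1) (y - x).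
  by move=> n; have [y Gy hy] := adh Q eps _ Qn e0 (lam_ok n); exists y.
move/choice => [y hy].
pose S n := [set w | normQ p Q (y n - x) w < eps].
have mS n : measurable (S n) by apply: mlt; exact: (normQ_meas HR).
pose U n := \bigcup_(k in [set k | (k <= n)%N]) S k.
have mU n : measurable (U n) by apply: bigcup_measurable => k _; exact: mS.
have ex n : exists z, Dset Q eps (U n) z.
  elim: n => [|n [z' [Gz' Hz']]].
    exists (y 0%N); split; first exact: (hy 0%N).1.
    apply: aeW => w [k]; rewrite /= leqn0 => /eqP -> h; exact: ltW.
  pose ind := \1_(U n) : T -> R.
  have mind : measurable_fun setT ind by exact: measurable_indic.
  exists (act (cr ind) z' + act (cr (fun w => 1 - ind w)) (y n.+1)); split.
    apply: HG => //; first exact: (hy n.+1).1.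
    by apply: aeW => w; rewrite /ind indicE; case: (_ \in _) => /=; rewrite ?ler01 ?lexx.
  set z := act _ z' + _.
  have tA := normQ_tri HR Q (z - z') (z' - x).
  have tB := normQ_tri HR Q (z - y n.+1) (y n.+1 - x).
  have tC := normQ_hom HR Q (y n.+1 - z') (measurable_funB (measurable_cst (1:R)) mind).
  have tD := normQ_hom HR Q (z' - y n.+1) mind.
  rewrite -(diff1 _ _ mind) -/z in tC.
  rewrite -(diff2 _ _ mind) -/z in tD.
  rewrite [z - z' + _]addrA subrK in tA.
  rewrite [z - y n.+1 + _]addrA subrK in tB.
  apply: filterS (aeI2 (aeI2 tA tB) (aeI2 (aeI2 tC tD) Hz')) => w.
  move=> [[hA hB] [[hC hD] hz]] Uw.
  case: (pselect (U n w)) => Unw.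
    have i1 : ind w = 1 by rewrite /ind indicE mem_set.
    have e : (cst 1 \- ind) w = 1 - ind w by [].
    rewrite hC e i1 subrr normr0 mul0r add0r in hA.
    exact: (le_trans hA (hz Unw)).
  have i0 : ind w = 0 by rewrite /ind indicE memNset.
  rewrite hD i0 normr0 mul0r add0r in hB.
  apply: (le_trans hB); apply: ltW.
  case: Uw => k /= hk Sk.
  have kn : k = n.+1.
    apply/eqP; rewrite eqn_leq hk /=; rewrite ltnNge; apply/negP => kle.
    by apply: Unw; exists k.
  by rewrite -kn.
pose Fam (A : set E) := exists n, A = Dset Q eps (U n).
have [z hz] : exists z, forall A, Fam A -> A z.
  apply: HC.2.
    move=> A [n ->]; split; first exact: Dset_convex.
    apply: Dset_closed; [exact: ltW | exact: mU].
  move=> s _ sF.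
  have [N hN] : exists N, forall A, List.In A s -> Dset Q eps (U N) `<=` A.
    elim: s sF => [|A s IH] sF; first by exists 0%N.
    have [n ->] := sF A (or_introl erefl).
    have [N hN] := IH (fun B hB => sF B (or_intror hB)).
    exists (maxn n N) => B [<-|hB].
      apply: Dset_sub => w [k hk Sk]; exists k => //.
      exact: (leq_trans hk (leq_maxl n N)).
    apply: subset_trans (hN B hB); apply: Dset_sub => w [k hk Sk]; exists k => //.
    exact: (leq_trans hk (leq_maxr n N)).
  have [z0 hz0] := ex N.
  by exists z0 => A hA; exact: hN A hA z0 hz0.
exists z; split; first by have [] := hz _ (ex_intro _ 0%N erefl).
have h1 : {ae P, forall w, forall n, U n w -> normQ p Q (z - x) w <= eps}.
  apply: ae_foralln => n; by have [] := hz _ (ex_intro _ n erefl).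
pose Z := \bigcap_n ~` S n.
have mZ : measurable Z by apply: bigcapT_measurable => n; exact: measurableC.
have PZ : P Z = 0%E.
  apply: small_meas0 => // m.
  have sub : Z `<=` ~` S m by move=> w hw; by apply: hw.
  apply: (le_trans (le_measure _ _ _ sub)); rewrite ?inE //.
    exact: measurableC.
  apply: (le_trans (probC_le (mS m) (hy m).2)); rewrite lee_fin; exact: inv_le.
have hZ : {ae P, forall w, ~ Z w}.
  exists Z; split => // w /= /contrapT; exact.
apply: filterS (aeI2 h1 hZ) => w [h hnZ] _.
case: (pselect (exists n, S n w)) => [[n Sn]|no].
  by apply: (h n); exists n => //=.
by exfalso; apply: hnZ => n _ Sn; apply: no; exists n.
Qed.

End DsetS.

Lemma normQ_catl (R : realType) (d : measure_display) (T : measurableType d)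
  (E : zmodType) (I : Type) (p : I -> E -> T -> R) Q1 Q2 u w :
  normQ p Q1 u w <= normQ p (Q1 ++ Q2) u w.
Proof.
elim: Q1 => [|i Q1 IH] /=; first by rewrite /normQ big_nil; exact: normQ_ge0.
rewrite /normQ !big_cons -!/(normQ p _ u w) ge_max !le_max lexx /=.
by rewrite IH orbT.
Qed.

Lemma normQ_catr (R : realType) (d : measure_display) (T : measurableType d)
  (E : zmodType) (I : Type) (p : I -> E -> T -> R) Q1 Q2 u w :
  normQ p Q2 u w <= normQ p (Q1 ++ Q2) u w.
Proof.
elim: Q1 => [|i Q1 IH] /=; first exact: lexx.
rewrite /normQ big_cons -!/(normQ p _ u w) le_max.
by rewrite IH orbT.
Qed.

Theorem theorem4p2 (R : realType) (d : measure_display) (T : measurableType d)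
    (P : probability T R) (isC : bool) (E : zmodType)
    (act : (T -> R[i]) -> E -> E) (I : Type) (p : I -> E -> T -> R)
    (G : set E) :
  RLCModule P isC act p ->
  G !=set0 -> L0convex P act G ->
  L0convexly_compact P act p G ->
  epslam_closed P p G.
Proof.
move=> HR [g Gg] HG HC x adh.
have [HM Hs Hz] := HR.
pose Fam (A : set E) := exists Q eps,
  [/\ Q <> [::], 0 < eps & A = Dset P p G x Q eps setT].
have [z hz] : exists z, forall A, Fam A -> A z.
  apply: HC.2.
    move=> A [Q [eps [Qn e0 ->]]]; split; first exact: (Dset_convex HR HG).
    apply: (Dset_closed HR) => //; exact: ltW.
  move=> s sn sF.
  have [Q [eps [Qn e0 hQ]]] : exists Q eps, [/\ Q <> [::], 0 < eps &
      forall A, List.In A s -> Dset P p G x Q eps setT `<=` A].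
    elim: s sn sF => [//|A s IH] _ sF.
    have [Q1 [e1 [Q1n e1p ->]]] := sF _ (or_introl erefl).
    case: s IH sF => [|B s] IH sF.
      by exists Q1, e1; split => // C [<-|[]].
    have [Q2 [e2 [Q2n e2p h2]]] :=
      IH (fun e => ltac:(discriminate)) (fun C hC => sF C (or_intror hC)).
    exists (Q1 ++ Q2), (Num.min e1 e2); split.
    - by case: Q1 Q1n.
    - by rewrite lt_min e1p e2p.
    - move=> C [<-|hC].
        move=> w [Gw h]; split => //; apply: filterS h => t ht _.
        apply: (le_trans (normQ_catl _ _ _ _ _)); apply: (le_trans (ht Logic.I)).
        by rewrite ge_min lexx.
      apply: subset_trans (h2 C hC).
      move=> w [Gw h]; split => //; apply: filterS h => t ht _.
      apply: (le_trans (normQ_catr _ _ _ _ _)); apply: (le_trans (ht Logic.I)).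
      by rewrite ge_min lexx orbT.
  have [z0 hz0] := stage1 HR HG HC Qn e0 adh.
  by exists z0 => A hA; exact: hQ A hA z0 hz0.
case: (pselect (exists i : I, True)) => [[i0 _]|noI]; last first.
  have e : g - x = 0.
    by apply/Hz => i; exfalso; apply: noI; exists i.
  by rewrite -(subr0_eq e).
have Gz : G z.
  have [] := hz (Dset P p G x [:: i0] 1 setT).
    by exists [:: i0], 1; split.
  by [].
suff e : z - x = 0 by rewrite -(subr0_eq e).
apply/Hz => i.
have h : {ae P, forall w, forall n : nat,
    normQ p [:: i] (z - x) w <= n.+1%:R^-1}.
  apply: ae_foralln => n.
  have [] := hz (Dset P p G x [:: i] (n.+1%:R^-1) setT).
    by exists [:: i], (n.+1%:R^-1); split => //; rewrite invr_gt0 ltr0Sn.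
  by move=> _ hn; apply: filterS hn => w hw; apply: hw.
apply: filterS (aeI2 h (L0n_ge0 (Hs i) (z - x))) => w [hw h0].
apply/eqP; rewrite eq_le h0 andbT leNgt; apply/negP => pos.
have [k hk] := ltr_add_invr pos.
have := hw k; rewrite normQ_cons normQ_nil ge_max => /andP[+ _].
by rewrite add0r in hk; rewrite leNgt hk.
Qed.
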